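(* In the multiple-choice secretary problem with predictions with capacity $k$, run the Learned Kleinberg algorithm with any threshold $\theta\ge0$, and assume $1\le |M|\le\sqrt{k}\ln k$. Let $t_M=\min_{i\in M}t_i$ be the first arrival time of a candidate in $M$, let $S=\{i\in\hat S: t_i<t_M\}$ be the set of candidates hired before time $t_M$, and define $k'=k-|S|-1$. Then $\Pr(k'\ge\sqrt{k}\ln k)\ge 1-\frac{3\ln k}{\sqrt{k}}$.
   Context: Multiple-choice secretary problem with predictions (continuous-time model): there are $n$ candidates $N=\{1,\dots,n\}$, each with actual value $v(i)>0$ and predicted value $\hat v(i)\ge 0$ (known in advance), and a capacity $k$ (positive integer). Each candidate $i$ independently receives an arrival time $t_i$ uniform on $[0,1]$. For $S\subseteq N$, $\hat v(S)=\sum_{i\in S}\hat v(i)$. $M=\{i\in N : |1-\hat v(i)/v(i)|>\theta\}$. The Learned Kleinberg algorithm fixes $\hat S\in\arg\max_{S\subseteq N,|S|\le k}\hat v(S)$, hires the candidates of $\hat S$ as they arrive until the first candidate of $M$ arrives (at time $t_M$), then hires that candidate and runs Kleinberg's multiple-choice secretary algorithm with the remaining capacity $k'=k-|S|-1$ on the later-arriving candidates. The probability is over the arrival times. *)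

(* Defs.v *)
From HB Require Import structures.
From mathcomp Require Import all_boot all_order all_algebra.
From mathcomp Require Import all_classical all_reals all_analysis.
Set Implicit Arguments. Unset Strict Implicit. Unset Printing Implicit Defensive.
Import Order.TTheory GRing.Theory Num.Theory.
Local Open Scope classical_set_scope.
Local Open Scope ring_scope.

Definition vsum (R : realType) (n : nat) (vh : 'I_n -> R) (S : {set 'I_n}) : R :=
  \sum_(i in S) vh i.

Definition mispredicted (R : realType) (n : nat) (v vh : 'I_n -> R) (theta : R)
  : {set 'I_n} := [set i | theta < `|1 - vh i / v i|].

Definition is_pred_opt (R : realType) (n k : nat) (vh : 'I_n -> R) (Sh : {set 'I_n}) :=
  (#|Sh| <= k)%N /\ forall S : {set 'I_n}, (#|S| <= k)%N -> vsum vh S <= vsum vh Sh.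

Definition uniform01_rv d (T : measurableType d) (R : realType)
  (P : probability T R) (X : T -> R) :=
  measurable_fun setT X /\
  forall A : set R, measurable A ->
    P (X @^-1` A) = lebesgue_measure (A `&` `[0%R, 1%R]).

Definition mutually_independent d (T : measurableType d) (R : realType) (n : nat)
  (P : probability T R) (t : 'I_n -> T -> R) :=
  forall (J : {set 'I_n}) (A : 'I_n -> set R), (forall i, measurable (A i)) ->
    P [set w | forall i, i \in J -> A i (t i w)] =
    (\prod_(i in J) P (t i @^-1` A i))%E.

Definition hired_before (R : realType) (T : Type) (n : nat) (t : 'I_n -> T -> R)
  (Sh M : {set 'I_n}) (w : T) : {set 'I_n} :=
  [set i in Sh | [forall j in M, t i w < t j w]].

(* Main.v *)
Require Import Defs.
From HB Require Import structures.
From mathcomp Require Import all_boot all_order all_algebra.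
From mathcomp Require Import all_classical all_reals all_analysis.
From mathcomp Require Import ring lra zify.
Set Implicit Arguments. Unset Strict Implicit. Unset Printing Implicit Defensive.
Import Order.TTheory GRing.Theory Num.Theory.
Local Open Scope classical_set_scope.
Local Open Scope ring_scope.

Section Num.
Variable R : realType.

Lemma e_le3 : expR 1 <= 3 :> R.
Proof.
have h8 : (1 : R) = 8%:R * (1/8) by field.
rewrite h8 expRM_natl.
have hy : expR (1/8 : R) <= 8/7.
  have h1 := expR_ge1Dx (- (1/8) : R).
  have h2 : expR (1/8 : R) * expR (- (1/8)) = 1 by rewrite -expRD subrr expR0.
  have hp := expR_gt0 (1/8 : R).
  have hq := expR_gt0 (- (1/8) : R).
  nra.
have hp := expR_gt0 (1/8 : R).
apply: (le_trans (lerXn2r 8 _ _ hy)); rewrite ?nnegrE; try lra; rewrite !exprS expr0; lra.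

Qed.

Lemma ln3_ge1 : 1 <= ln (3 : R).
Proof.
rewrite -{1}(expRK 1) ler_ln ?posrE ?expR_gt0 //; first exact: e_le3.
Qed.

Lemma ln_pow3 (m : nat) (x : R) : 3 ^+ m <= x -> m%:R <= ln x.
Proof.
move=> h.
have h3 : 0 < (3 : R) ^+ m by rewrite exprn_gt0.
apply: (le_trans _ (_ : ln (3 ^+ m) <= ln x)).
  rewrite lnXn // -mulr_natl; have := ln3_ge1.
  have : 0 <= (m%:R : R) by [].
  nra.
rewrite ler_ln ?posrE //; exact: (lt_le_trans h3 h).
Qed.

Lemma ln2_ge : (1/2 : R) <= ln 2.
Proof.
have he : expR (1/2 : R) ^+ 2 <= 3.
  rewrite -expRM_natl (_ : 2%:R * (1/2) = 1 :> R); first exact: e_le3.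
  by field.
have hp := expR_gt0 (1/2 : R).
rewrite -(@ler_expR R) lnK ?posrE //.
move: he; rewrite expr2; nra.
Qed.

End Num.

Section Num2.
Variable R : realType.

Lemma polyF (p X : R) : 48 <= p -> 3 * p <= X -> 16 * X <= p ^+ 2 ->
  (1 + 3/2 * p) * p^+2 * X + 4 * (1 + 3/2* p) * (X - 1 - p) * X <= 3 * p^+3 * (X - 1 - p).
Proof.
move=> hp h1 h2.
have H1 : 0 <= (4 + 6 * p) * ((X - 3 * p) * (p^+2/16 - X)).
  apply: mulr_ge0; first lra.
  apply: mulr_ge0; lra.
have hc : 0 <= 9/8 * p^+3 - 53/4 * p^+2 - 2 * p + 4.
  have : 0 <= p^+2 * (9/8 * p - 53/4) - 2 * p by rewrite expr2; nra.
  move=> h; rewrite exprS; lra.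
have H2 : 0 <= (X - 3 * p) * (9/8 * p^+3 - 53/4 * p^+2 - 2 * p + 4).
  apply: mulr_ge0; lra.
have H3 : 0 <= 3/2 * p^+4 - 42 * p^+3 - 6 * p^+2 + 12 * p.
  have : 0 <= p^+3 * (3/2 * p - 42) - 6 * p^+2.
    have : 0 <= p^+2 * (p * (3/2 * p - 42) - 6).
      apply: mulr_ge0; first by rewrite expr2; nra.
      nra.
    move=> h; rewrite exprS; lra.
  move=> h; rewrite (exprS p 3); lra.
rewrite !exprS expr0 in H1 H2 H3 *.
nra.
Qed.

Lemma main_ineq (s l N : R) : 4 <= l -> 3 * l < s -> s^+2 - (1 + s* l) < N ->
  (1 + 3/2 * (s* l)) <= N /\
  (1 + 3/2* (s* l)) / N + (1 + 3/2* (s* l)) / (s* l/2)^+2 <= 3 * l / s.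
Proof.
move=> hl hs hN.
have s0 : 0 < s by lra.
set p := s * l; set X := s^+2.
rewrite -/p -/X in hN.
have hp4 : 4 * s <= p by rewrite /p; nra.
have hp : 48 <= p by lra.
have hX : 3 * p <= X by rewrite /X /p expr2; nra.
have hX2 : 16 * X <= p^+2.
  rewrite /X expr2 expr2.
  have h : 0 <= (p - 4 * s) * (p + 4 * s) by apply: mulr_ge0; lra.
  nra.
have hu : 0 < X - 1 - p by lra.
split; first lra.
have N0 : 0 < N by lra.
have mu0 : 0 < 1 + 3/2 * p by lra.
have p0 : 0 < p by lra.
apply: (@le_trans _ _ ((1 + 3/2* p) / (X - 1 - p) + (1 + 3/2* p) / (p/2)^+2)).
  rewrite lerD2r ler_pM2l // lef_pV2 ?posrE //; lra.
have -> : 3 * l / s = 3 * p / X by rewrite /p /X; field; lra.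
have F := @polyF p X hp hX hX2.
have X0 : 0 < X by lra.
rewrite -subr_ge0.
have -> : 3 * p / X - ((1 + 3 / 2 * p) / (X - 1 - p) + (1 + 3 / 2 * p) / (p / 2) ^+ 2)
  = (3 * p^+3 * (X - 1 - p) - ((1 + 3/2 * p) * p^+2 * X + 4 * (1 + 3/2* p) * (X - 1 - p) * X))
     / ((X - 1 - p) * p^+2 * X).
  by field; rewrite ?expf_neq0; lra.
apply: divr_ge0; first lra.
apply: mulr_ge0; [apply: mulr_ge0|]; try lra.

Qed.
End Num2.

Section Prob.

Variables (R : realType) (d : measure_display) (T : measurableType d)
  (P : probability T R).

Lemma meas_all (I : Type) (r : seq I) (b : I -> T -> bool) :
  (forall j, measurable [set w | b j w]) ->
  measurable [set w | all (fun j => b j w) r].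
Proof.
move=> hb; elim: r => [|j r IH] /=.
  rewrite (_ : [set w | true] = setT); first exact: measurableT.
  by apply/seteqP; split.
rewrite (_ : [set w | b j w && all (fun j => b j w) r] =
   [set w | b j w] `&` [set w | all (fun j => b j w) r]).
  exact: measurableI.
by apply/seteqP; split => w /=; [move/andP | move=> [-> ->]].
Qed.

Lemma meas_forall (I : finType) (b : I -> T -> bool) :
  (forall j, measurable [set w | b j w]) ->
  measurable [set w | [forall j, b j w]].
Proof.
move=> hb.
rewrite (_ : [set w | [forall j, b j w]] = [set w | all (fun j => b j w) (enum I)]).
  exact: meas_all.
apply/seteqP; split => w /=.
  by move/forallP => h; apply/allP => j _; exact: h.
by move/allP => h; apply/forallP => j; apply: h; rewrite mem_enum.
Qed.

Lemma meas_fib (I : finType) (f : T -> {set I}) :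
  (forall i, measurable [set w | i \in f w]) ->
  forall H, measurable [set w | f w = H].
Proof.
move=> hf H.
rewrite (_ : [set w | f w = H] = [set w | [forall i, (i \in f w) == (i \in H)]]).
  apply: meas_forall => i; case: (i \in H).
    by under eq_set do rewrite eqb_id; exact: hf.
  rewrite (_ : [set w | (i \in f w) == false] = ~` [set w | i \in f w]).
    exact: measurableC.
  by apply/seteqP; split => w /=; rewrite eqbF_neg => /negP.
apply/seteqP; split => w /=.
  by move=> ->; apply/forallP => i.
by move/forallP => h; apply/setP => i; apply/eqP/h.
Qed.

Lemma meas_pred (I : finType) (f : T -> {set I}) :
  (forall i, measurable [set w | i \in f w]) ->
  forall Q : pred {set I}, measurable [set w | Q (f w)].
Proof.
move=> hf Q.
rewrite (_ : [set w | Q (f w)] =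
   ~` [set w | [forall H, ~~ (Q H && (f w == H))]]).
  apply: measurableC; apply: meas_forall => H.
  case: (boolP (Q H)) => QH /=.
    rewrite (_ : [set w | ~~ (f w == H)] = ~` [set w | f w = H]).
      exact/measurableC/meas_fib.
    by apply/seteqP; split => w /=; move/eqP.
  by rewrite (_ : [set w | true] = setT) //; apply/seteqP; split.
apply/seteqP; split => w /=.
  move=> Qw /forallP /(_ (f w)); by rewrite Qw eqxx.
move=> h; apply: contrapT => nQ; apply: h; apply/forallP => H.
apply/negP => /andP [QH /eqP e]; apply: nQ; by rewrite e.
Qed.

Lemma add_fib_seq (I : finType) (f : T -> {set I}) :
  (forall i, measurable [set w | i \in f w]) ->
  forall r : seq {set I}, uniq r ->
  P [set w | f w \in r] = (\sum_(H <- r) P [set w | f w = H])%E.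
Proof.
move=> hf; elim => [|H r IH] /=.
  move=> _; rewrite big_nil (_ : [set w | false] = set0) ?measure0 //.
  by apply/seteqP; split.
move=> /andP [Hr ur]; rewrite big_cons -IH //.
rewrite (_ : [set w | f w \in H :: r] = [set w | f w = H] `|` [set w | f w \in r]).
  rewrite measureU //.
  - exact: meas_fib.
  - by have /= := meas_pred hf (fun K => K \in r).
  - apply/seteqP; split => w //= [e]; by rewrite e (negbTE Hr).
apply/seteqP; split => w /=; rewrite inE.
  by case/orP => [/eqP ->|]; [left|right].
by case => [->|->]; rewrite ?eqxx ?orbT.
Qed.

Lemma add_fib (I : finType) (f : T -> {set I}) :
  (forall i, measurable [set w | i \in f w]) ->
  forall Q : pred {set I},
  P [set w | Q (f w)] = (\sum_(H | Q H) P [set w | f w = H])%E.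
Proof.
move=> hf Q.
rewrite -big_filter -add_fib_seq //; last by rewrite filter_uniq // index_enum_uniq.
congr (P _); apply/seteqP; split => w /=; rewrite mem_filter mem_index_enum andbT //.
Qed.

Lemma prE (A : set T) : measurable A -> P A = (fine (P A))%:E.
Proof. by move=> mA; rewrite fineK // (fin_num_measure P). Qed.

Lemma add_fibR (I : finType) (f : T -> {set I}) :
  (forall i, measurable [set w | i \in f w]) ->
  forall Q : pred {set I},
  fine (P [set w | Q (f w)]) = \sum_(H | Q H) fine (P [set w | f w = H]).
Proof.
move=> hf Q; rewrite add_fib //.
rewrite (eq_bigr (fun H => (fine (P [set w | f w = H]))%:E)); last first.
  by move=> H _; rewrite -prE //; exact: meas_fib.
by rewrite sumEFin.
Qed.


Lemma meas_gtc (X : T -> R) (c : R) : measurable_fun setT X ->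
  measurable [set w | c < X w].
Proof.
move=> mX.
rewrite (_ : [set w | c < X w] = setT `&` X @^-1` `]c, +oo[).
  exact: mX.
apply/seteqP; split => w /=; rewrite in_itv /= andbT; [by move=> h; split|by case].
Qed.

Lemma meas_lt (X Y : T -> R) : measurable_fun setT X -> measurable_fun setT Y ->
  measurable [set w | X w < Y w].
Proof.
move=> mX mY; have m := measurable_realfun.measurable_funB mY mX.
rewrite (_ : [set w | X w < Y w] = [set w | 0 < (Y \- X) w]).
  exact: meas_gtc.
by apply/seteqP; split => w /=; rewrite subr_gt0.
Qed.

Lemma unif_pre (X : T -> R) (c : R) : uniform01_rv P X -> 0 <= c < 1 ->
  P (X @^-1` `]c, +oo[) = (1 - c)%:E.
Proof.
case=> mX hX /andP [c0 c1].
rewrite hX; last exact: measurable_itv.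
rewrite (_ : `]c, +oo[ `&` `[0, 1] = [set` `]c, 1]]).
  by rewrite lebesgue_measure_itv /= lte_fin c1 EFinB.
apply/seteqP; split => x /=; rewrite !in_itv /= andbT.
  by case=> -> /andP [].
move=> /andP [cx x1]; split => //; apply/andP; split => //.
exact: le_trans c0 (ltW cx).
Qed.

End Prob.



Lemma sum_sq_bound (R : realFieldType) (I : finType) (A : {set I})
    (pr : {set I} -> R) (delta : R) :
  (forall i j, i \in A -> j \in A ->
     \sum_H pr H * ((i \in H) && (j \in H))%:R <= delta^+2 + (if i == j then delta else 0)) ->
  \sum_H pr H * (\sum_(i in A) ((i \in H)%:R : R))^+2 <=
    delta * #|A|%:R + (delta * #|A|%:R)^+2.
Proof.
move=> inner.
have e : forall H, pr H * (\sum_(i in A) ((i \in H)%:R : R))^+2 =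
    \sum_(i in A) \sum_(j in A) pr H * ((i \in H) && (j \in H))%:R.
  move=> H; rewrite expr2 mulr_suml mulr_sumr; apply: eq_bigr => i _.
  rewrite mulr_sumr mulr_sumr; apply: eq_bigr => j _.
  by rewrite -natrM mulnb.
rewrite (eq_bigr _ (fun H _ => e H)) exchange_big /=.
under eq_bigr do rewrite exchange_big /=.
apply: (@le_trans _ _ (\sum_(i in A) \sum_(j in A) (delta^+2 + (if i == j then delta else 0)))).
  by apply: ler_sum => i iA; apply: ler_sum => j jA; exact: inner.
rewrite (eq_bigr (fun _ => delta^+2 *+ #|A| + delta)); last first.
  move=> i iA; rewrite big_split /= sumr_const; congr (_ + _).
  rewrite (bigD1 i) //= eqxx big1 ?addr0 // => j /andP [_ /negbTE].
  by rewrite eq_sym => ->.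
rewrite sumr_const; set m := #|A|.
rewrite -(mulr_natr (_ + _) m) -(mulr_natr (delta^+2) m).
rewrite le_eqVlt; apply/orP; left; apply/eqP; ring.
Qed.

Lemma sq_mono (R : realType) (x y z : R) : 0 <= x -> x <= z - y -> x^+2 <= (y - z)^+2.
Proof.
move=> h0 h; have e : (y - z)^+2 = (z - y)^+2 by rewrite -sqrrN opprB.
rewrite e; apply: lerXn2r; rewrite ?nnegrE; lra.
Qed.

Theorem lemma3 (R : realType) (d : measure_display) (T : measurableType d)
  (P : probability T R) (n k : nat) (v vh : 'I_n -> R) (theta : R)
  (Sh : {set 'I_n}) (t : 'I_n -> T -> R) :
  (0 < k)%N ->
  (forall i, 0 < v i) -> (forall i, 0 <= vh i) -> 0 <= theta ->
  is_pred_opt k vh Sh ->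
  (forall i, uniform01_rv P (t i)) ->
  mutually_independent P t ->
  (1 <= #|mispredicted v vh theta|)%N ->
  (#|mispredicted v vh theta|%:R <= Num.sqrt (k%:R : R) * ln (k%:R : R)) ->
  ((1 - 3 * ln (k%:R : R) / Num.sqrt (k%:R : R))%:E <=
    P [set w | (Num.sqrt (k%:R : R) * ln (k%:R : R) <=
               k%:R - #|hired_before t Sh (mispredicted v vh theta) w|%:R - 1)%R])%E.
Proof.
move=> k0 vpos vh0 th0 [hSh _] hunif hind hM1 hMk.
set M := mispredicted v vh theta in hM1 hMk *.
set s := Num.sqrt (k%:R : R) in hMk *.
set l := ln (k%:R : R) in hMk *.
have s0 : 0 < s by rewrite sqrtr_gt0 ltr0n.
have l0 : 0 <= l by apply: ln_ge0; rewrite ler1n.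
have ss : s ^+ 2 = k%:R by rewrite sqr_sqrtr // ler0n.
have M1 : (1 : R) <= #|M|%:R by rewrite ler1n.
case: (lerP s (3 * l)) => hsl.
  apply: (@le_trans _ _ 0%E); last exact: measure_ge0.
  by rewrite lee_fin subr_le0 ler_pdivlMr // mul1r.
have lp3 : forall m : nat, (3 ^ m <= k)%N -> m%:R <= l.
  by move=> m hm; apply: ln_pow3; rewrite -natrX ler_nat.
have hl4 : 4 <= l.
  case: (leqP 81 k) => hk; first exact: (lp3 4%N).
  exfalso.
  suff : s <= 3 * l by rewrite leNgt hsl.
  suff key : (k%:R : R) <= (3 * l)^+2.
    have : s^+2 <= (3 * l)^+2 by rewrite ss.
    rewrite !expr2; nra.
  case: (leqP 27 k) => h27.
    have := lp3 3%N h27; have : (k%:R : R) <= 80%:R by rewrite ler_nat -ltnS.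
    rewrite expr2; nra.
  case: (leqP 9 k) => h9.
    have := lp3 2%N h9; have : (k%:R : R) <= 26%:R by rewrite ler_nat -ltnS.
    rewrite expr2; nra.
  case: (leqP 3 k) => h3.
    have := lp3 1%N h3; have : (k%:R : R) <= 8%:R by rewrite ler_nat -ltnS.
    rewrite expr2; nra.
  case: (leqP 2 k) => h2.
    have e : k = 2%N by lia.
    have : (1/2 : R) <= l by rewrite /l e; exact: ln2_ge.
    rewrite e expr2; nra.
  have e : k = 1%N by lia.
  have : l = 0 by rewrite /l e ln1.
  move: hMk M1; rewrite /l e => + + l00; rewrite l00 mulr0; lra.

have [i0 i0M] : exists i0, i0 \in M.
  by apply/set0Pn; rewrite -card_gt0.
set A := Sh :\: M.
set N := #|A|.
have hNk : (N <= k)%N by apply: leq_trans (subset_leq_card (subsetDl Sh M)) hSh.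
have hsubA : forall w, hired_before t Sh M w \subset A.
  move=> w. apply/fintype.subsetP => i; rewrite inE => /andP [iSh /forallP h].
  rewrite inE iSh andbT; apply/negP => iM.
  by have := implyP (h i) iM; rewrite ltxx.
have mt : forall i, measurable_fun setT (t i) by move=> i; case: (hunif i).
have mhired : forall i, measurable [set w | i \in hired_before t Sh M w].
  move=> i; rewrite /hired_before.
  under eq_set do rewrite inE.
  case: (boolP (i \in Sh)) => iSh /=.
    apply: meas_forall => j; case: (boolP (j \in M)) => jM /=.
      exact: meas_lt.
    by rewrite (_ : [set w | true] = setT) //; apply/seteqP; split.
  by rewrite (_ : [set w | false] = set0) //; apply/seteqP; split.
set Gs := [set w | _ <= _ ].
have mG : measurable Gs.
  by have := meas_pred mhired (fun H => s * l <= k%:R - #|H|%:R - 1).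
case: (lerP (N%:R) (k%:R - (1 + s * l))) => hN.
  rewrite (_ : Gs = setT); last first.
    apply/seteqP; split => w //= _.
    have := subset_leq_card (hsubA w); rewrite -(ler_nat R) -/N => h.
    rewrite /Gs /=; lra.
  rewrite probability_setT lee_fin.
  have : 0 <= 3 * l / s by apply: divr_ge0; lra.
  lra.

have hN' : s^+2 - (1 + s * l) < N%:R by rewrite ss.
have [hmuN hineq] := main_ineq hl4 hsl hN'.
set mu := 1 + 3/2 * (s * l) in hmuN hineq.
have sl0 : 0 <= s * l by apply: mulr_ge0; lra.
have mu0 : 0 < mu by rewrite /mu; lra.
have N0 : 0 < (N%:R : R) by lra.
set delta := mu / N%:R in hineq.
have del0 : 0 < delta by apply: divr_gt0.
have del1 : delta <= 1 by rewrite ler_pdivrMr // mul1r.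
set c := 1 - delta.
have hc : 0 <= c < 1 by apply/andP; split; rewrite /c; lra.
have Pgt : forall i, P (t i @^-1` `]c, +oo[) = delta%:E.
  by move=> i; rewrite unif_pre // /c opprB addrC subrK.
have Pgt' : forall i, P [set w | c < t i w] = delta%:E.
  move=> i; rewrite -(Pgt i); congr (P _).
  by apply/seteqP; split => w /=; rewrite in_itv /= andbT.
set f := fun w => [set i | (i \in A) && (c < t i w)]%SET.
have mf : forall i, measurable [set w | i \in f w].
  move=> i; rewrite /f; under eq_set do rewrite finset.in_set.
  case: (i \in A) => /=; first exact: meas_gtc.
  by rewrite (_ : [set w | false] = set0) //; apply/seteqP; split.
set Y := fun H : {set 'I_n} => \sum_(i in A) ((i \in H)%:R : R).
have hcardY : forall H, (#|A :&: H|%:R : R) = Y H.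
  move=> H; rewrite /Y -sum1_card natr_sum big_mkcond [RHS]big_mkcond /=.
  by apply: eq_bigr => i _; rewrite inE; case: (i \in A); case: (i \in H).
set a := 1 + s * l.
set E1 := [set w | c < t i0 w].
set E2 := [set w | Y (f w) < a].
have mE1 : measurable E1 by exact: meas_gtc.
have mE2 : measurable E2 by have := meas_pred mf (fun H => Y H < a).
have hsub : ~` Gs `<=` E1 `|` E2.
  move=> w /= nG; apply: contrapT => /not_orP [n1 n2]; apply: nG.
  have h1 : t i0 w <= c by rewrite leNgt; apply/negP.
  have h2 : a <= Y (f w) by rewrite leNgt; apply/negP.
  have hh : hired_before t Sh M w \subset A :\: f w.
    apply/fintype.subsetP => i hi; rewrite finset.in_setD.
    have iA : i \in A := fintype.subsetP (hsubA w) i hi.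
    move: hi; rewrite inE => /andP [_ /forallP /(_ i0)]; rewrite i0M /= => hlt.
    rewrite iA andbT; apply/negP; rewrite /f finset.in_set => /andP [_ hci].
    have : t i w < t i w by apply: (lt_trans hlt); exact: le_lt_trans h1 hci.
    by rewrite ltxx.
  have hc1 := subset_leq_card hh.
  have hc2 := cardsID (f w) A.
  have e : (#|hired_before t Sh M w| + #|A :&: f w| <= k)%N.
    rewrite addnC; apply: leq_trans hNk; rewrite /N -hc2 leq_add2l; exact: hc1.
  move: e; rewrite -(ler_nat R) natrD hcardY => e.
  rewrite /a in h2; rewrite /Gs /=; lra.
have hPE2 : fine (P E2) <= mu / (s * l / 2)^+2.
  have fE : forall w x, (x \in f w) = (x \in A) && (c < t x w).
    by move=> w x; rewrite /f finset.in_set.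
  set pr := fun H : {set 'I_n} => fine (P [set w | f w = H]).
  have pr0 : forall H, 0 <= pr H by move=> H; apply: fine_ge0; exact: measure_ge0.
  have S0 : \sum_H pr H = 1.
    have /= := add_fibR P mf (fun _ => true).
    rewrite (_ : [set w | true] = setT); last by apply/seteqP; split.
    by rewrite probability_setT /= => <-.
  have S1 : forall i, i \in A -> \sum_(H : {set 'I_n} | i \in H) pr H = delta.
    move=> i iA; have /= <- := add_fibR P mf (fun H : {set 'I_n} => i \in H).
    rewrite (_ : [set w | i \in f w] = [set w | c < t i w]) ?Pgt' //.
    by apply/seteqP; split => w /=; rewrite /f finset.in_set iA.
  have S2 : forall i j, i \in A -> j \in A -> i != j ->
      \sum_(H : {set 'I_n} | (i \in H) && (j \in H)) pr H = delta ^+ 2.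
    move=> i j iA jA ij.
    have /= <- := add_fibR P mf (fun H : {set 'I_n} => (i \in H) && (j \in H)).
    have /= hI := hind [set i; j]%SET (fun _ : 'I_n => [set` `]c, +oo[]) (fun _ => measurable_itv _).
    rewrite (_ : [set w | (i \in f w) && (j \in f w)] =
      [set w | forall x, x \in [set i; j]%SET -> [set` `]c, +oo[] (t x w)]).
      rewrite hI.
      rewrite big_setU1 /=; last by rewrite finset.in_set1.
      by rewrite big_set1 !Pgt /= expr2.
    apply/seteqP; split => w /=.
      rewrite !fE iA jA /= => /andP [hi hj] x.
      rewrite !finset.in_setU1 finset.in_set1 => /orP [/eqP -> | /eqP ->];
        by rewrite in_itv /= andbT.
    move=> h; rewrite !fE iA jA /=.
    have := h i; have := h j.
    rewrite !finset.in_setU1 finset.in_set1 !eqxx orbT /= !in_itv /= !andbT.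
    by move=> -> // ->.
  have SY : \sum_H pr H * Y H = mu.
    have e : forall H, pr H * Y H = \sum_(i in A) pr H * (i \in H)%:R.
      by move=> H; rewrite /Y mulr_sumr.
    rewrite (eq_bigr _ (fun H _ => e H)) exchange_big /=.
    rewrite (eq_bigr (fun _ => delta)); last first.
      move=> i iA; rewrite -(S1 i iA) [RHS]big_mkcond /=; apply: eq_bigr => H _.
      by rewrite mulr_natr mulrb.
    by rewrite sumr_const -/N -mulr_natr /delta divfK // lt0r_neq0.
  have inner : forall i j, i \in A -> j \in A ->
      \sum_H pr H * ((i \in H) && (j \in H))%:R <= delta^+2 + (if i == j then delta else 0).
    move=> i j iA jA.
    rewrite (_ : \sum_H _ = \sum_(H : {set 'I_n} | (i \in H) && (j \in H)) pr H); last first.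
      by rewrite [RHS]big_mkcond /=; apply: eq_bigr => H _; rewrite mulr_natr mulrb.
    case: (eqVneq i j) => [<-|ij].
      under eq_bigl do rewrite andbb.
      rewrite S1 // ?eqxx; have := sqr_ge0 delta; lra.
    rewrite S2 //; lra.
  have SY2 : \sum_H pr H * (Y H)^+2 <= mu + mu^+2.
    have h := @sum_sq_bound R _ A pr delta inner.
    have dN : delta * N%:R = mu by rewrite /delta divfK // lt0r_neq0.
    by rewrite -/N dN in h.
  have hV : \sum_H pr H * (Y H - mu)^+2 <= mu.
    have eV : \sum_H pr H * (Y H - mu)^+2 =
        \sum_H pr H * (Y H)^+2 - 2 * mu * \sum_H pr H * Y H + mu^+2 * \sum_H pr H.
      by rewrite !mulr_sumr -sumrB -big_split /=; apply: eq_bigr => H _; ring.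
    move: SY2; rewrite eV SY S0 mulr1 !expr2 => h; lra.
  have /= e2 := add_fibR P mf (fun H : {set 'I_n} => Y H < a).
  rewrite /E2 e2.
  have hb : 0 < s * l / 2 by apply: divr_gt0 => //; apply: mulr_gt0; lra.
  apply: (@le_trans _ _ (\sum_H pr H * (Y H - mu)^+2 / (s * l / 2)^+2)).
    rewrite [X in X <= _]big_mkcond /=; apply: ler_sum => H _.
    case: ifP => hY.
      rewrite -mulrA; apply: ler_peMr; first exact: pr0.
      rewrite ler_pdivlMr ?exprn_gt0 // mul1r.
      have h : s * l / 2 <= mu - Y H by rewrite /mu; rewrite /a in hY; lra.
      exact: sq_mono (ltW hb) h.
    apply: mulr_ge0; first by apply: mulr_ge0; [exact: pr0 | exact: sqr_ge0].
    by rewrite invr_ge0 exprn_ge0 //; lra.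
  rewrite -mulr_suml; apply: ler_wpM2r => //.
  by rewrite invr_ge0 exprn_ge0 //; lra.
rewrite (prE P mG) lee_fin.
have hC : fine (P (~` Gs)) = 1 - fine (P Gs).
  apply: EFin_inj; rewrite -(prE P); last exact: measurableC.
  by rewrite probability_setC // (prE P mG).
have hle : (P (~` Gs) <= P E1 + P E2)%E.
  apply: le_trans (measureU2 _ mE1 mE2).
  apply: le_measure => //; rewrite inE; [exact: measurableC | exact: measurableU].
move: hle; rewrite (prE P (measurableC mG)) (prE P mE2) Pgt' lee_fin hC => hle.
lra.
Qed.
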